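(* Let $m=m(n)$ and $p=p(n)\in(0,1)$, let $N_E$ be the number of edges of $\mathcal G(n,m,p)$ and $\hat p=1-(1-p^2)^m$. If $\widetilde N_E=(N_E-\mathbb E[N_E])/\sqrt{\operatorname{Var}[N_E]}$ converges in distribution to a standard normal random variable as $n\to\infty$, then $n^2\hat p(1-\hat p)\to\infty$.
   Context: Random intersection graph $\mathcal G(n,m,p)$: vertices $v_1,\ldots,v_n$, attributes $a_1,\ldots,a_m$; each vertex chooses each attribute independently with probability $p$; two vertices are adjacent iff they chose at least one common attribute. *)

(* Defs.v *)
From HB Require Import structures.
From mathcomp Require Import all_boot all_order all_algebra.
From mathcomp Require Import all_classical all_reals all_analysis.
Set Implicit Arguments. Unset Strict Implicit. Unset Printing Implicit Defensive.
Import Order.TTheory GRing.Theory Num.Theory.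
Local Open Scope ring_scope.
Local Open Scope classical_set_scope.

Section RIG.
Variable R : realType.

(* An outcome of G(n,m,p): for each (vertex i, attribute a), whether i chose a. *)
Definition rig_outcome (n m : nat) := {ffun 'I_n * 'I_m -> bool}.

Definition rig_weight (n m : nat) (p : R) (w : rig_outcome n m) : R :=
  \prod_(k : 'I_n * 'I_m) (if w k then p else 1 - p).

Definition rig_prob (n m : nat) (p : R) (A : pred (rig_outcome n m)) : R :=
  \sum_(w | A w) rig_weight p w.

Definition rig_expect (n m : nat) (p : R) (X : rig_outcome n m -> R) : R :=
  \sum_w rig_weight p w * X w.

Definition rig_var (n m : nat) (p : R) (X : rig_outcome n m -> R) : R :=
  rig_expect p (fun w => (X w - rig_expect p X) ^+ 2).

Definition rig_adj (n m : nat) (w : rig_outcome n m) (i j : 'I_n) : bool :=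
  [exists a : 'I_m, w (i, a) && w (j, a)].

Definition rig_NE (n m : nat) (w : rig_outcome n m) : R :=
  (#|[set ij : 'I_n * 'I_n | (ij.1 < ij.2)%N && rig_adj w ij.1 ij.2]|)%:R.

(* Standardized number of edges (convention x/0 = 0 if Var = 0). *)
Definition rig_NE_std (n m : nat) (p : R) (w : rig_outcome n m) : R :=
  (rig_NE w - rig_expect p (@rig_NE n m)) / Num.sqrt (rig_var p (@rig_NE n m)).

Definition std_normal_cdf (x : R) : R := fine (normal_prob 0 1 [set t : R | t <= x]).

Definition p_hat (m : nat) (p : R) : R := 1 - (1 - p ^+ 2) ^+ m.

End RIG.

(* Main.v *)
Require Import Defs.
From HB Require Import structures.
From mathcomp Require Import all_boot all_order all_algebra.
From mathcomp Require Import all_classical all_reals all_analysis.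
From mathcomp Require Import ring lra measurable_realfun.
Import Order.TTheory GRing.Theory Num.Theory numFieldNormedType.Exports.
Local Open Scope classical_set_scope.
Local Open Scope ring_scope.

Section Fin.
Variables (R : realType) (n m : nat) (p : R).
Hypothesis (p0 : 0 <= p) (p1 : p <= 1).

Lemma weight_ge0 (w : rig_outcome n m) : 0 <= rig_weight p w.
Proof.
apply: prodr_ge0 => k _; case: (w k) => //; by rewrite subr_ge0.
Qed.

Lemma expect_prod (h : 'I_n * 'I_m -> bool -> R) :
  \sum_(w : rig_outcome n m) rig_weight p w * \prod_k h k (w k) =
  \prod_k (p * h k true + (1 - p) * h k false).
Proof.
transitivity (\prod_(k : 'I_n * 'I_m) \sum_(b : bool)
   ((if b then p else 1 - p) * h k b)); last first.
  by apply: eq_bigr => k _; rewrite big_bool.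
rewrite bigA_distr_bigA /=; apply: eq_bigr => w _.
by rewrite /rig_weight -big_split.
Qed.

Lemma weight_sum : \sum_(w : rig_outcome n m) rig_weight p w = 1.
Proof.
transitivity (\sum_(w : rig_outcome n m) rig_weight p w * \prod_(k : 'I_n * 'I_m) (1:R)).
  by apply: eq_bigr => w _; rewrite big1_eq mulr1.
rewrite (expect_prod (fun _ _ => 1)); apply: big1 => k _; by rewrite !mulr1 addrC subrK.
Qed.

Lemma pair_prod (i j : 'I_n) (G1 G2 : 'I_n * 'I_m -> R) : i != j ->
  \prod_(k : 'I_n * 'I_m) (if k.1 == i then G1 k else if k.1 == j then G2 k else 1)
  = \prod_(a : 'I_m) (G1 (i, a) * G2 (j, a)).
Proof.
move=> ij.
transitivity (\prod_(v : 'I_n) \prod_(a : 'I_m) (if v == i then G1 (v, a) else if v == j then G2 (v, a) else 1)).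
  by rewrite pair_bigA; apply: eq_bigr => -[v a] _.
rewrite exchange_big /=; apply: eq_bigr => a _.
rewrite (bigD1 i) //= eqxx (bigD1 j) /=; last by rewrite eq_sym.
have ji : (j == i) = false by apply/negbTE; rewrite eq_sym.
rewrite ji eqxx.
rewrite big1 ?mulr1 // => v /andP [/negbTE -> /negbTE ->] //.
Qed.

Lemma prod_expand (X : 'I_m -> R) :
  \prod_a (1 - X a) = \sum_(f : {ffun 'I_m -> bool}) \prod_a (if f a then - X a else 1).
Proof.
transitivity (\prod_a \sum_(b : bool) (if b then - X a else 1)).
  by apply: eq_bigr => a _; rewrite big_bool addrC.
by rewrite bigA_distr_bigA.
Qed.


Lemma notadj_ind (w : rig_outcome n m) i j :
  ((~~ rig_adj w i j : nat)%:R : R) = \prod_a (1 - ((w (i, a) && w (j, a)) : nat)%:R).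
Proof.
rewrite /rig_adj; case: existsP => [[a ha]|hn] /=.
  by rewrite (bigD1 a) //= ha subrr mul0r.
rewrite big1 // => a _.
have : ~~ (w (i, a) && w (j, a)) by apply/negP => h; apply: hn; exists a.
by move/negbTE => ->; rewrite subr0.
Qed.

Lemma E_notadj (i j : 'I_n) : i != j ->
  \sum_(w : rig_outcome n m) rig_weight p w * ((~~ rig_adj w i j : nat)%:R) = (1 - p ^+ 2) ^+ m.
Proof.
move=> ij.
under eq_bigr do rewrite notadj_ind prod_expand mulr_sumr.
rewrite exchange_big /=.
transitivity (\sum_(f : {ffun 'I_m -> bool}) \prod_a (if f a then - p ^+ 2 else 1)); last first.
  by rewrite -(prod_expand (fun _ => p ^+ 2)) prodr_const card_ord.
apply: eq_bigr => f _.
pose h := fun (k : 'I_n * 'I_m) (t : bool) =>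
  if k.1 == i then (if f k.2 then - ((t : nat)%:R : R) else 1)
  else if k.1 == j then (if f k.2 then (t : nat)%:R else 1) else 1.
transitivity (\sum_(w : rig_outcome n m) rig_weight p w * \prod_k h k (w k)).
  apply: eq_bigr => w _; congr (_ * _); rewrite /h.
  rewrite (@pair_prod i j (fun k => if f k.2 then - ((w k : nat)%:R : R) else 1)
                     (fun k => if f k.2 then ((w k : nat)%:R : R) else 1) ij).
  apply: eq_bigr => a _ /=; case: (f a) => /=; last by rewrite mulr1.
  by rewrite mulNr -natrM; case: (w (i, a)); case: (w (j, a)).


rewrite expect_prod.
transitivity (\prod_(k : 'I_n * 'I_m) (if k.1 == i then (if f k.2 then - p else 1)
  else if k.1 == j then (if f k.2 then p else 1) else 1)).
  apply: eq_bigr => k _; rewrite /h.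
  case: (k.1 == i); case: (k.1 == j); case: (f k.2) => /=; lra.
rewrite (@pair_prod i j (fun k => if f k.2 then - p else 1) (fun k => if f k.2 then p else 1) ij).
apply: eq_bigr => a _ /=; case: (f a); rewrite ?mulr1 //.
by rewrite mulNr expr2.
Qed.


Lemma prob_ind (A : pred (rig_outcome n m)) :
  rig_prob p A = \sum_w rig_weight p w * ((A w : nat)%:R).
Proof.
rewrite /rig_prob big_mkcond /=; apply: eq_bigr => w _.
by case: (A w); rewrite /= ?mulr1 ?mulr0.
Qed.

Lemma prob3 (A B C : pred (rig_outcome n m)) :
  (forall w, (A w : nat) + B w <= C w)%N ->
  rig_prob p A + rig_prob p B <= rig_prob p C.
Proof.
move=> h; rewrite !prob_ind -big_split /=; apply: ler_sum => w _.
rewrite -mulrDr; apply: ler_wpM2l; first exact: weight_ge0.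
by rewrite -natrD ler_nat.
Qed.

Lemma card_sumR (P : pred ('I_n * 'I_n)) :
  ((#|[set ij | P ij]|)%:R : R) = \sum_ij ((P ij : nat)%:R).
Proof.
rewrite -sum1_card natr_sum big_mkcond /=; apply: eq_bigr => ij _.
  have -> : (ij \in [set ij0 | P ij0]) = P ij by rewrite /in_mem /= /in_set asboolb.
  by case: (P ij).
Qed.

Definition Kn := #|[set ij : 'I_n * 'I_n | (ij.1 < ij.2)%N]|.
Definition Ycard (w : rig_outcome n m) :=
  #|[set ij : 'I_n * 'I_n | (ij.1 < ij.2)%N && rig_adj w ij.1 ij.2]|.
Definition Y2 (w : rig_outcome n m) :=
  #|[set ij : 'I_n * 'I_n | (ij.1 < ij.2)%N && ~~ rig_adj w ij.1 ij.2]|.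

Lemma NE_Y2 w : rig_NE R w = Kn%:R - (Y2 w)%:R :> R.
Proof.
rewrite /rig_NE /Kn /Y2 !card_sumR; apply/eqP; rewrite eq_sym subr_eq -big_split /=.
apply/eqP; apply: eq_bigr => ij _.
by case: (ij.1 < ij.2)%N; case: (rig_adj w ij.1 ij.2); rewrite /= ?addr0 ?add0r.
Qed.

Lemma Kn_le : (Kn%:R : R) <= n%:R ^+ 2.
Proof.
rewrite -natrX ler_nat /Kn; apply: leq_trans (max_card _) _.
by rewrite card_prod card_ord.
Qed.

Lemma p_hat01 : 0 <= p_hat m p <= 1.
Proof.
have h0 : 0 <= 1 - p ^+ 2 by rewrite subr_ge0 exprn_ile1.
have h1 : 1 - p ^+ 2 <= 1 by rewrite lerBlDr lerDl sqr_ge0.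
rewrite /p_hat subr_ge0 exprn_ile1 //= lerBlDr lerDl exprn_ge0 //.
Qed.

Lemma E_adj (i j : 'I_n) : i != j ->
  \sum_(w : rig_outcome n m) rig_weight p w * ((rig_adj w i j : nat)%:R) = p_hat m p.
Proof.
move=> ij; rewrite /p_hat -(@E_notadj i j ij).
transitivity (\sum_(w : rig_outcome n m) rig_weight p w -
   \sum_(w : rig_outcome n m) rig_weight p w * ((~~ rig_adj w i j : nat)%:R)); last by rewrite weight_sum.
rewrite -sumrB; apply: eq_bigr => w _.
by case: (rig_adj w i j); rewrite /= ?mulr1 ?mulr0 ?subr0 ?subrr.
Qed.

Lemma E_notadj' (i j : 'I_n) : i != j ->
  \sum_(w : rig_outcome n m) rig_weight p w * ((~~ rig_adj w i j : nat)%:R) = 1 - p_hat m p.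
Proof. move=> ij; rewrite E_notadj // /p_hat. lra. Qed.

Lemma E_pairs (X : rig_outcome n m -> 'I_n -> 'I_n -> bool) (c : R) :
  (forall i j : 'I_n, (i < j)%N -> \sum_w rig_weight p w * ((X w i j : nat)%:R) = c) ->
  \sum_w rig_weight p w * (\sum_(ij : 'I_n * 'I_n) (((ij.1 < ij.2)%N && X w ij.1 ij.2 : nat)%:R))
  = Kn%:R * c.
Proof.
move=> h; under eq_bigr do rewrite mulr_sumr.
rewrite exchange_big /= /Kn card_sumR mulr_suml; apply: eq_bigr => ij _.
case: ltnP => hij /=.
  by rewrite mul1r -(h _ _ hij).
by rewrite mul0r big1 // => w _; rewrite mulr0.
Qed.

Lemma ltn_neq (i j : 'I_n) : (i < j)%N -> i != j.
Proof. by move=> h; apply/eqP => e; rewrite e ltnn in h. Qed.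

Lemma E_NE : \sum_w rig_weight p w * (Ycard w)%:R = Kn%:R * p_hat m p.
Proof.
under eq_bigr do rewrite /Ycard card_sumR.
by rewrite (@E_pairs (fun w i j => rig_adj w i j) (p_hat m p)) // => i j h; rewrite E_adj // ltn_neq.
Qed.

Lemma E_Y2 : \sum_w rig_weight p w * (Y2 w)%:R = Kn%:R * (1 - p_hat m p).
Proof.
under eq_bigr do rewrite /Y2 card_sumR.
by rewrite (@E_pairs (fun w i j => ~~ rig_adj w i j) (1 - p_hat m p)) // => i j h; rewrite E_notadj' // ltn_neq.
Qed.


Lemma atom (Y : rig_outcome n m -> nat) (M : nat) : (0 < M)%N ->
  \sum_w rig_weight p w * (Y w)%:R <= M%:R / 2 ->
  exists j : nat, 1 / (2 * M%:R) <= rig_prob p (fun w => Y w == j).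
Proof.
move=> M0 hE.
have Mp : 0 < M%:R :> R by rewrite ltr0n.
have pw : forall w, 1 <= \sum_(j < M) ((Y w == j : nat)%:R : R) + (Y w)%:R / M%:R.
  move=> w; case: (ltnP (Y w) M) => h.
    rewrite (bigD1 (Ordinal h)) //= eqxx /=.
    have : 0 <= \sum_(j < M | j != Ordinal h) ((Y w == j : nat)%:R : R).
      by apply: sumr_ge0 => j _; rewrite ler0n.
    have : 0 <= (Y w)%:R / M%:R :> R by rewrite divr_ge0 ?ler0n // ltW.
    lra.
  have : 1 <= (Y w)%:R / M%:R :> R by rewrite ler_pdivlMr // mul1r ler_nat.
  have : 0 <= \sum_(j < M) ((Y w == j : nat)%:R : R) by apply: sumr_ge0 => j _; rewrite ler0n.
  lra.
have e1 : \sum_(j < M) rig_prob p (fun w => Y w == j) =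
   \sum_w rig_weight p w * \sum_(j < M) ((Y w == j : nat)%:R).
  under eq_bigr do rewrite prob_ind.
  by rewrite exchange_big /=; apply: eq_bigr => w _; rewrite mulr_sumr.
have e2 : \sum_w rig_weight p w * ((Y w)%:R / M%:R) = (\sum_w rig_weight p w * (Y w)%:R) / M%:R.
  by rewrite mulr_suml; apply: eq_bigr => w _; rewrite mulrA.
have h3 : (\sum_w rig_weight p w * (Y w)%:R) / M%:R <= 1 / 2.
  by rewrite ler_pdivrMr // mulrC mul1r.
have h4 : 1 <= \sum_(j < M) rig_prob p (fun w => Y w == j) + (\sum_w rig_weight p w * (Y w)%:R) / M%:R.
  rewrite e1 -e2 -big_split /=.
  apply: le_trans (_ : _ <= \sum_(w : rig_outcome n m) rig_weight p w * 1) _.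
    by under eq_bigr do rewrite mulr1; rewrite weight_sum.
  apply: ler_sum => w _; rewrite -mulrDr; apply: ler_wpM2l; [exact: weight_ge0|exact: pw].
case: (pickP (fun j : 'I_M => 1 / (2 * M%:R) <= rig_prob p (fun w => Y w == j))) => [j hj | hn].
  by exists j.
have : \sum_(j < M) rig_prob p (fun w => Y w == j) < \sum_(j < M) (1 / (2 * M%:R) : R).
  apply: ltr_sum; first by apply/hasP; exists (Ordinal M0); rewrite ?mem_index_enum.
  by move=> j _; have := hn j; rewrite /= => /negbT; rewrite -ltNge.
rewrite sumr_const card_ord.
have -> : (1 / (2 * M%:R) : R) *+ M = 1 / 2.
  rewrite -mulr_natr; field; by rewrite lt0r_neq0.
lra.
Qed.

Lemma prob_mono (A B : pred (rig_outcome n m)) :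
  (forall w, A w -> B w) -> rig_prob p A <= rig_prob p B.
Proof.
move=> h; rewrite !prob_ind; apply: ler_sum => w _; apply: ler_wpM2l; first exact: weight_ge0.
by rewrite ler_nat; case: (A w) (h w) => // ->.
Qed.

End Fin.

Lemma comb (R : realType) (C : R) : exists2 d : R, 0 < d &
  forall n m (p : R), 0 <= p <= 1 ->
  n%:R ^+ 2 * p_hat m p * (1 - p_hat m p) <= C ->
  exists y : R, d <= rig_prob p (fun w : rig_outcome n m => rig_NE_std p w == y).
Proof.
pose M := (Num.Def.truncn (4 * `|C|)).+1.
have hM : 4 * `|C| < M%:R.
  by rewrite -truncn_lt_nat ?ltnSn // mulr_ge0 // normr_ge0.
have M0 : (0 < M)%N by [].
have Mp : 0 < M%:R :> R by rewrite ltr0n.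
have hCC : C <= `|C| := ler_norm C.
exists (1 / (2 * M%:R)); first by rewrite divr_gt0 // mulr_gt0.
move=> n m p /andP[p0 p1] hC.
have /andP[ph0 ph1] := @p_hat01 R m p p0 p1.
have hKn := @Kn_le R n.
have hn2 : 0 <= n%:R ^+ 2 :> R by rewrite exprn_ge0 // ler0n.
have hK0 : 0 <= (Kn n)%:R :> R by rewrite ler0n.
case: (lerP (p_hat m p) (1/2)) => hph.
  have hE : \sum_w rig_weight p w * ((Ycard n m w)%:R : R) <= M%:R / 2.
    rewrite (@E_NE R n m p).
    have h1 : (Kn n)%:R * p_hat m p <= n%:R ^+ 2 * p_hat m p by apply: ler_wpM2r.
    have h2 : n%:R ^+ 2 * p_hat m p * (2 * p_hat m p - 1) <= 0.
      by rewrite mulr_ge0_le0 ?mulr_ge0 //; lra.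
    lra.
  have [j hj] := @atom R n m p p0 p1 _ M M0 hE.
  exists (((j%:R : R) - rig_expect p (@rig_NE R n m)) / Num.sqrt (rig_var p (@rig_NE R n m))).
  apply: le_trans hj _; apply: (@prob_mono R n m p p0 p1) => w /eqP e.
  by rewrite /rig_NE_std; have -> : rig_NE R w = (Ycard n m w)%:R by []; rewrite e.
have hE : \sum_w rig_weight p w * ((Y2 n m w)%:R : R) <= M%:R / 2.
  rewrite (@E_Y2 R n m p).
  have h1 : (Kn n)%:R * (1 - p_hat m p) <= n%:R ^+ 2 * (1 - p_hat m p) by apply: ler_wpM2r; lra.
  have h2 : n%:R ^+ 2 * (1 - p_hat m p) * (1 - 2 * p_hat m p) <= 0.
    by rewrite mulr_ge0_le0 ?mulr_ge0 //; lra.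
  lra.
have [j hj] := @atom R n m p p0 p1 _ M M0 hE.
exists (((Kn n)%:R - (j%:R : R) - rig_expect p (@rig_NE R n m)) / Num.sqrt (rig_var p (@rig_NE R n m))).
apply: le_trans hj _; apply: (@prob_mono R n m p p0 p1) => w /eqP e.
by rewrite /rig_NE_std NE_Y2 e.
Qed.

Section Phi.
Variable R : realType.
Local Notation nu := (normal_prob (0:R) 1).

Lemma Ic_itv (x : R) : [set t : R | t <= x] = [set` `]-oo, x]].
Proof. by apply/seteqP; split => t /=; rewrite in_itv. Qed.

Lemma Ioc_itv (a b : R) : [set t : R | a < t <= b] = [set` `]a, b]].
Proof. by apply/seteqP; split => t /=; rewrite in_itv. Qed.

Lemma Io_itv (a : R) : [set t : R | a < t] = [set` `]a, +oo[].
Proof. by apply/seteqP; split => t /=; rewrite in_itv /= andbT. Qed.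

Lemma nu_fin (A : set R) : measurable A ->
  nu A = (fine (nu A))%:E /\ 0 <= fine (nu A) <= 1.
Proof.
move=> mA.
have h0 : (0 <= nu A)%E := measure_ge0 nu A.
have h1 : (nu A <= 1)%E := probability_le1 nu mA.
have fA : nu A \is a fin_num by rewrite ge0_fin_numE // (le_lt_trans h1) // ltey.
split; first by rewrite fineK.
by rewrite -!lee_fin fineK // h1 andbT; exact: h0.
Qed.


Lemma mIc (x : R) : measurable [set t : R | t <= x].
Proof. by rewrite Ic_itv; exact: measurable_itv. Qed.
Lemma mIoc (a b : R) : measurable [set t : R | a < t <= b].
Proof. by rewrite Ioc_itv; exact: measurable_itv. Qed.
Lemma mIo (a : R) : measurable [set t : R | a < t].
Proof. by rewrite Io_itv; exact: measurable_itv. Qed.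

Lemma Phi01 (x : R) : 0 <= std_normal_cdf x <= 1.
Proof. by have [_ h] := nu_fin _ (mIc x). Qed.

Lemma Phi_split (a b : R) : a <= b ->
  std_normal_cdf b = std_normal_cdf a + fine (nu [set t | a < t <= b]).
Proof.
move=> ab.
have e : [set t : R | t <= b] = [set t | t <= a] `|` [set t : R | a < t <= b].
  apply/seteqP; split => t /=.
    by move=> tb; case: (leP t a) => ta; [left | right; apply/andP; split].
  by case => [ta | /andP [_ tb]]; [exact: le_trans ta ab | exact tb].
have d : [set t : R | t <= a] `&` [set t : R | a < t <= b] = set0.
  apply/seteqP; split => t //= [ta /andP [hat _]].
  by move: ta; rewrite leNgt hat.
have [e1 _] := nu_fin _ (mIc a).
have [e2 _] := nu_fin _ (mIoc a b).
rewrite /std_normal_cdf e measureU //; [|exact: mIc|exact: mIoc].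
have f1 : normal_prob (0:R) 1 [set t | t <= a] \is a fin_num by rewrite e1.
have f2 : normal_prob (0:R) 1 [set t | a < t <= b] \is a fin_num by rewrite e2.
exact: (fineD f1 f2).
Qed.

Lemma peak_le1 : normal_peak (1:R) <= 1.
Proof.
have h : 0 < Num.sqrt (1 ^+ 2 * pi *+ 2 : R).
  by rewrite sqrtr_gt0 expr1n mul1r pmulrn_lgt0 // pi_gt0.
rewrite /normal_peak invf_le1 // -{1}sqrtr1 ler_sqrt.
  by have := pi_ge2 R; rewrite expr1n mul1r -mulr_natr; lra.
by have := pi_ge2 R; rewrite expr1n mul1r -mulr_natr; lra.
Qed.

Lemma nu_Ioc (a b : R) : a <= b -> fine (nu [set t | a < t <= b]) <= b - a.
Proof.
move=> ab.
have [e _] := nu_fin _ (mIoc a b).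
rewrite -lee_fin -e. rewrite /normal_prob.
apply: le_trans.
  apply: (@ge0_le_integral _ _ _ _ _ _ _ (fun=> (normal_peak (1:R))%:E)) => //=.
  - exact: mIoc.
  - by move=> x _; rewrite lee_fin normal_pdf_ge0.
  - apply/measurable_EFinP; apply: measurable_funTS; exact: measurable_normal_pdf.
  - by move=> x _; rewrite lee_fin normal_pdf_ub // oner_neq0.

rewrite integral_cst; last exact: mIoc.
rewrite Ioc_itv.
have L : lebesgue_measure ([set` `]a, b]] : set R) = (b - a)%:E.
  rewrite lebesgue_measure_itv /= lte_fin; case: ltP => h; first by rewrite EFinB.
  have -> : a = b by apply/eqP; rewrite eq_le ab h.
  by rewrite subrr.
have -> : (lebesgue_measure_lebesgue_measure__canonical__measure_function_Measure R
     `]a, b]%classic) = (b - a)%:E by exact: L.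
have p0 : 0 <= normal_peak (1:R) := normal_peak_ge0 1.
have p1 := peak_le1.
rewrite -EFinM lee_fin -[leRHS]mul1r; apply: ler_wpM2r => //.
by rewrite subr_ge0.
Qed.


Lemma nu_setT_split (A B : set R) : measurable A -> measurable B ->
  A `&` B = set0 -> A `|` B = setT -> fine (nu A) + fine (nu B) = 1.
Proof.
move=> mA mB d u.
have [e1 _] := nu_fin _ mA.
have [e2 _] := nu_fin _ mB.
have f1 : nu A \is a fin_num by rewrite e1.
have f2 : nu B \is a fin_num by rewrite e2.
have := probability_setT nu; rewrite -u measureU // => h.
have := congr1 fine h; rewrite (fineD f1 f2) => ->.
by [].
Qed.

Lemma nu_to1 (F : nat -> set R) : (forall k, measurable (F k)) ->
  (forall i j, (i <= j)%N -> F i `<=` F j) ->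
  (forall t, exists k, F k t) ->
  forall eps, 0 < eps -> \forall k \near \oo, 1 - eps < fine (nu (F k)).
Proof.
move=> mF hF hcov eps he.
have mU : measurable (\bigcup_k F k) by apply: bigcupT_measurable.
have U : \bigcup_k F k = setT.
  by apply/seteqP; split => // t _; have [k hk] := hcov t; exists k.
have hom : {homo F : n m / (n <= m)%N >-> (n <= m)%O}.
  by move=> i j ij; apply/subsetPset; exact: hF.
have h := @nondecreasing_cvg_mu _ _ R nu F mF mU hom.
rewrite U in h; move: h.
set X := (X in (_ --> X)).
have -> : X = 1%E by rewrite /X; exact: probability_setT.
move=> h.
have /fine_cvgP [_ hc] := h.
have := @cvgr_dist_lt _ _ _ _ _ _ _ hc _ he.
move=> H; near=> k.
suff : `|1 - fine (nu (F k))| < eps by rewrite ltr_norml; lra.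
near: k; exact: H.
Unshelve. all: end_near.
Qed.

Lemma tails (eps : R) : 0 < eps -> exists L : R, (0 <= L) /\ (std_normal_cdf (- L) < eps) /\ (1 - eps < std_normal_cdf L).
Proof.
move=> he.
have cov1 : forall t : R, exists k : nat, t <= k%:R.
  move=> t; exists (Num.Def.truncn `|t|).+1.
  apply: le_trans (ler_norm t) _; apply: ltW.
  by rewrite -truncn_lt_nat ?ltnSn // normr_ge0.
have h1 : \forall k \near \oo, 1 - eps < fine (nu [set t : R | t <= k%:R]).
  apply: (@nu_to1 (fun k : nat => [set t : R | t <= k%:R])) => //.
  - by move=> k; exact: mIc.
  - by move=> i j ij t /= ht; apply: le_trans ht _; rewrite ler_nat.
have cov2 : forall t : R, exists k : nat, - k%:R < t.
  move=> t; have [k hk] := cov1 (- t); exists k.+1; rewrite ltrNl.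
  by apply: le_lt_trans hk _; rewrite ltr_nat.
have h2 : \forall k \near \oo, 1 - eps < fine (nu [set t : R | - k%:R < t]).
  apply: (@nu_to1 (fun k : nat => [set t : R | - k%:R < t])) => //.
  - by move=> k; exact: mIo.
  - move=> i j ij t /= ht; apply: le_lt_trans ht; rewrite lerN2 ler_nat //.
have hb : \forall k \near \oo, 1 - eps < fine (nu [set t : R | t <= k%:R]) /\
   1 - eps < fine (nu [set t : R | - k%:R < t]) by apply/near_andP.
have [k [hk1 hk2]] := filter_ex hb.
exists k%:R; split; first by rewrite ler0n.
split; last exact: hk1.
have := @nu_setT_split [set t : R | t <= - k%:R] [set t : R | - k%:R < t] (mIc _) (mIo _).
rewrite /std_normal_cdf.
have d : [set t : R | t <= - k%:R] `&` [set t : R | - k%:R < t] = set0.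
  by apply/seteqP; split => t //= [h3 h4]; move: h3; rewrite leNgt h4.
have u : [set t : R | t <= - k%:R] `|` [set t : R | - k%:R < t] = setT.
  by apply/seteqP; split => t //= _; case: (leP t (- k%:R)) => h; [left|right].
move=> /(_ d u); lra.
Qed.


Lemma Phi_lip (a b : R) : a <= b ->
  std_normal_cdf a <= std_normal_cdf b <= std_normal_cdf a + (b - a).
Proof.
move=> ab; rewrite (Phi_split _ _ ab).
have [_ /andP [h0 _]] := nu_fin _ (mIoc a b).
have := nu_Ioc _ _ ab.
move=> h; apply/andP; split; lra.
Qed.

Lemma find_interval (x : nat -> R) (y : R) (K : nat) :
  x 0%N < y -> y <= x K -> exists i, (i < K)%N /\ x i < y /\ y <= x i.+1.
Proof.
move=> h0; elim: K => [|K IH] hK.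
  by move: h0; rewrite ltNge hK.
case: (leP y (x K)) => h.
  by have [i [hi hh]] := IH h; exists i; split => //; apply: ltnW.
by exists K.
Qed.

Lemma no_atoms (F A : nat -> R -> R) (d : R) : 0 < d ->
  (forall x, F n x @[n --> \oo] --> std_normal_cdf x) ->
  (forall n x y, y <= x -> A n y <= F n x) ->
  (forall n x y, x < y -> A n y + F n x <= 1) ->
  (forall n x y z, x < y -> y <= z -> A n y + F n x <= F n z) ->
  \forall n \near \oo, forall y, A n y < d.
Proof.
move=> d0 hF h1 h2 h3.
pose e := d / 4.
have e0 : 0 < e by rewrite divr_gt0.
have [L [L0 [hL1 hL2]]] := tails _ e0.
pose x := fun i : nat => - L + i%:R * e.
have xS : forall i, x i.+1 = x i + e.
  by move=> i; rewrite /x -addn1 natrD mulrDl mul1r addrA.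
pose G := (Num.Def.truncn (2 * L / e)).+1.
have hG : 2 * L / e < G%:R.
  by rewrite -truncn_lt_nat ?ltnSn // divr_ge0 // ?mulr_ge0 // ltW.
have xG : L <= x G.
  have : 2 * L < G%:R * e by rewrite -ltr_pdivrMr.
  rewrite /x; lra.
have hE : forall K, \forall n \near \oo, forall i, (i <= K)%N ->
    `|std_normal_cdf (x i) - F n (x i)| < e.
  elim => [|K IH].
    near=> n => i; rewrite leqn0 => /eqP ->.
    near: n; exact: (@cvgr_dist_lt _ _ _ _ _ _ _ (hF (x 0%N)) _ e0).
  near=> n.
  suff [H1 H2] : (forall i, (i <= K)%N -> `|std_normal_cdf (x i) - F n (x i)| < e) /\
     `|std_normal_cdf (x K.+1) - F n (x K.+1)| < e.
    move=> i; rewrite leq_eqVlt ltnS => /orP [/eqP -> //|]; exact: H1.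
  near: n; apply/near_andP; split; first exact: IH.
  exact: (@cvgr_dist_lt _ _ _ _ _ _ _ (hF (x K.+1)) _ e0).
have hEG := hE G.
near=> n => y.
have hn : forall i, (i <= G)%N -> `|std_normal_cdf (x i) - F n (x i)| < e.
  near: n; exact: hEG.
have x0 : x 0%N = - L by rewrite /x mul0r addr0.
have ed : d = 4 * e by rewrite /e; lra.
case: (leP y (x 0%N)) => hy0.
  have := h1 n _ _ hy0.
  have := hn 0%N (leq0n _); rewrite ltr_norml x0 => /andP [u1 u2].
  move: hL1; lra.
case: (ltP (x G) y) => hyG.
  have := h2 n _ _ hyG.
  have := hn G (leqnn _); rewrite ltr_norml => /andP [u1 u2].
  have /andP [hm _] := Phi_lip _ _ xG.
  move: hL2; lra.
have [i [hi [hxi hyi]]] := find_interval _ _ _ hy0 hyG.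
have := h3 n _ _ _ hxi hyi.
have := hn i (ltnW hi); rewrite ltr_norml => /andP [u1 u2].
have := hn i.+1 hi; rewrite ltr_norml => /andP [u3 u4].
have xi : x i <= x i.+1 by rewrite xS lerDl ltW.
have /andP [_ hl] := Phi_lip _ _ xi.
have hd : x i.+1 - x i = e by rewrite xS; lra.
rewrite hd in hl.
lra.
Unshelve. all: end_near.
Qed.

End Phi.

Theorem lemma7p6 (R : realType) (m : nat -> nat) (p : nat -> R)
  (hp : forall n, 0 < p n < 1)
  (hclt : forall x : R,
     (fun n : nat => rig_prob (p n)
        (fun w : rig_outcome n (m n) => rig_NE_std (p n) w <= x) : R)
     @ \oo --> std_normal_cdf x) :
  (fun n : nat => (n%:R ^+ 2 * p_hat (m n) (p n) * (1 - p_hat (m n) (p n)) : R))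
    @ \oo --> +oo%R.
Proof.
apply/cvgryPge => C.
have [d d0 hd] := comb R C.
have hp' : forall n, 0 <= p n <= 1.
  by move=> n; have /andP [a b] := hp n; rewrite ltW // ltW.
pose F := fun n (x : R) => rig_prob (p n) (fun w : rig_outcome n (m n) => rig_NE_std (p n) w <= x).
pose A := fun n (y : R) => rig_prob (p n) (fun w : rig_outcome n (m n) => rig_NE_std (p n) w == y).
have H : \forall n \near \oo, forall y, A n y < d.
  apply: (@no_atoms R F A d d0 hclt).
  - move=> n x y yx; have /andP [a b] := hp' n.
    apply: (@prob_mono R n (m n) (p n) a b) => w /eqP ->; exact: yx.
  - move=> n x y xy; have /andP [a b] := hp' n.
    apply: le_trans (@prob3 R n (m n) (p n) a b _ _ xpredT _) _.
      move=> w /=; case: eqP => [->|_] //=.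
      by rewrite leNgt xy.
      by rewrite add0n leq_b1.
    rewrite prob_ind; under eq_bigr do rewrite mulr1.
    by rewrite weight_sum.
  - move=> n x y z xy yz; have /andP [a b] := hp' n.
    apply: (@prob3 R n (m n) (p n) a b) => w /=.
    case: eqP => [->|_] /=; first by rewrite leNgt xy /= yz.
    by rewrite add0n; case: (leP _ x) => // h; rewrite (le_trans h (le_trans (ltW xy) yz)).
near=> n.
have hn : forall y, A n y < d by near: n; exact: H.
case: (leP C (n%:R ^+ 2 * p_hat (m n) (p n) * (1 - p_hat (m n) (p n)))) => // hlt.
have [y hy] := hd n (m n) (p n) (hp' n) (ltW hlt).
by have := hn y; rewrite ltNge hy.
Unshelve. all: end_near.
Qed.
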